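(* Let $G$ be a finite group. Then every subgroup of $G$ (including $G$ itself) is $\psi$-divisible if and only if $G$ is cyclic of square-free order.
   Context: For a finite group $G$, $\psi(G)=\sum_{x\in G} o(x)$ denotes the sum of the orders of all elements of $G$. A finite group $G$ is called $\psi$-divisible if $\psi(H)$ divides $\psi(G)$ for every subgroup $H$ of $G$. *)

(* Defs.v *)
From mathcomp Require Import all_boot all_fingroup.
Set Implicit Arguments. Unset Strict Implicit. Unset Printing Implicit Defensive.
Local Open Scope group_scope.

Definition psi (gT : finGroupType) (A : {set gT}) : nat :=
  (\sum_(x in A) #[x])%N.

Definition psi_divisible (gT : finGroupType) (G : {group gT}) : bool :=
  [forall H : {group gT}, (H \subset G) ==> (psi H %| psi G)%N].

Definition square_free (n : nat) : Prop :=
  forall p : nat, prime p -> ~~ (p * p %| n)%N.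

(* Main.v *)
Require Import Defs.
From mathcomp Require Import all_boot all_fingroup all_solvable zify.


Lemma L0 a k : 1 + a %| a * k -> 1 + a %| k.
Proof.
move=> h; have : 1 + a %| (1 + a) * k - a * k by rewrite dvdn_sub // dvdn_mulr.
by rewrite mulnDl mul1n addnK.
Qed.

Lemma L1 a p : p %| a -> coprime (1 + a) p.
Proof.
move=> pa; rewrite /coprime -dvdn1.
have h1 : gcdn (1 + a) p %| p by apply: dvdn_gcdr.
have h2 : gcdn (1 + a) p %| 1 + a by apply: dvdn_gcdl.
have h3 := dvdn_trans h1 pa.
by rewrite -(dvdn_addr 1 h3) (addnC a 1).
Qed.

Lemma ar1 p : 1 < p -> ~~ (1 + (p-1)*p %| 1 + (p-1)*p + (p-1)*p*p).
Proof.
move=> p1; rewrite dvdn_addr //; apply/negP => /L0 /dvdn_leq.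
move: p1; case: p => [|[|p]] //= _.
rewrite !subSS subn0 => h; have := h isT. nia.
Qed.

Lemma ar2 p : prime p -> ~~ (1 + (p-1)*p %| 1 + (p-1)*p + (p-1)*p*(p*p)).
Proof.
move=> pp; have p1 := prime_gt1 pp.
rewrite dvdn_addr //; apply/negP => /L0.
rewrite Gauss_dvdr ?L1 ?dvdn_mull // => /dvdn_leq.
move: p1; case: p {pp} => [|[|p]] //= _.
rewrite !subSS subn0 => h; have := h isT. nia.
Qed.

Lemma ar3 p q : prime p -> prime q -> p != q ->
  1 + (q-1)*q %| 1 + (q-1)*q + (p-1)*p*q ->
  1 + (p-1)*p %| 1 + (q-1)*q + (p-1)*p*q -> False.
Proof.
move=> pp pq npq hq hp.
have p1 := prime_gt1 pp; have q1 := prime_gt1 pq.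
case: (ltngtP p q) => [lpq|lqp|epq]; last by rewrite epq eqxx in npq.
- move: hq; rewrite dvdn_addr //.
  rewrite (@Gauss_dvdl _ _ q); last by rewrite L1 // dvdn_mull.
  move=> /dvdn_leq.
  move: p1 q1 lpq; clear; case: p => [|[|p]] //; case: q => [|[|q]] //.
  rewrite !subSS !subn0 => _ _ l h; have := h ltac:(nia). nia.
- have e : 1 + (q-1)*q + (p-1)*p*q = (1 + (p-1)*p) * q + (q-1)*(q-1).
    clear -q1; case: q q1 => [|q] //= _. rewrite subSS subn0. nia.
  move: hp; rewrite e dvdn_addr; last by rewrite dvdn_mulr.
  move=> /dvdn_leq.
  move: p1 q1 lqp; clear; case: p => [|[|p]] //; case: q => [|[|q]] //.
  rewrite !subSS !subn0 => _ _ l h; have := h ltac:(nia). nia.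
Qed.

Lemma ar4 k1 c1 k2 c2 n z : k1 * c1 = n -> k2 * c2 = n -> 2 * z <= c1 -> 2 * z <= c2 -> 0 < z -> 0 < n ->
  k1 * (c1 - z) + k2 * (c2 - z) <= n - z -> False.
Proof.
move=> h1 h2 l1 l2 z0 n0.
have [e1 E1] : exists e, c1 = e + z by exists (c1 - z); rewrite subnK //; apply: leq_trans l1; rewrite leq_pmull.
have [e2 E2] : exists e, c2 = e + z by exists (c2 - z); rewrite subnK //; apply: leq_trans l2; rewrite leq_pmull.
subst c1 c2; rewrite !addnK => h.
move: h1 h2 l1 l2; rewrite !mulnDr => h1 h2 l1 l2.
have a1 : k1 * z <= k1 * e1 by rewrite leq_mul2l; apply/orP; right; lia.
have a2 : k2 * z <= k2 * e2 by rewrite leq_mul2l; apply/orP; right; lia.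
lia.
Qed.
Lemma ar5 k c n z : k * c = n -> 1 < k -> 0 < z -> z <= c -> k * (c - z) < n - z.
Proof.
move=> h k1 z0 zc; rewrite mulnBr h.
have : z < k * z by rewrite -{1}(mul1n z) ltn_mul2r z0.
have : k * z <= n by rewrite -h leq_mul2l zc orbT.
lia.
Qed.

Section S.
Variable gT : finGroupType.
Implicit Types G H K L X Q P Y : {group gT}.
Local Open Scope group_scope.

Lemma psi_split H K d : K \subset H -> {in H :\: K, forall x, #[x] = d} ->
  psi H = (psi K + (#|H| - #|K|) * d)%N.
Proof.
move=> sKH hd; rewrite /psi (big_setID K) /= (setIidPr sKH).
congr (_ + _)%N; rewrite (eq_bigr (fun _ => d)) ?sum_nat_const //.
by rewrite cardsD (setIidPr sKH).
Qed.

Lemma psi1 : psi [1 gT] = 1%N.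
Proof. by rewrite /psi big_set1 order1. Qed.

Lemma psi_prime X : prime #|X| -> psi X = (1 + (#|X| - 1) * #|X|)%N.
Proof.
move=> pX; rewrite (@psi_split X 1%G #|X|) ?sub1G ?psi1 ?cards1 //.
move=> x /setDP[xX]; rewrite inE => nx1.
have : #[x] %| #|X| by apply: order_dvdG.
case/primeP: pX => _ /[apply] /orP[|/eqP //].
by rewrite order_eq1 => /eqP ex; rewrite ex eqxx in nx1.
Qed.


Lemma psi_divP {H K} : psi_divisible H -> K \subset H -> (psi K %| psi H)%N.
Proof. by move=> /forallP /(_ K) /implyP; apply. Qed.

Lemma no_p2 Q p : prime p -> #|Q| = (p ^ 2)%N -> psi_divisible Q -> False.
Proof.
move=> pp oQ dQ.
have [x xQ ox] : {x | x \in Q & #[x] = p}.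
  by apply: Cauchy => //; rewrite oQ dvdn_exp.
set X := <[x]>%G.
have sXQ : X \subset Q by rewrite cycle_subG.
have oX : #|X| = p by [].
have hX := psi_divP dQ sXQ.
have pX : psi X = (1 + (p - 1) * p)%N by rewrite (psi_prime X) oX.
have ordy : forall y, y \in Q :\: X -> exists2 m, m <= 2 & #[y] = (p ^ m)%N.
  move=> y /setDP[yQ _]; apply/dvdn_pfactor => //; rewrite -oQ; exact: order_dvdG.
have ny1 : forall y, y \in Q :\: X -> #[y] != 1%N.
  move=> y /setDP[_ yX]; rewrite order_eq1; apply: contraNneq yX => ->; exact: group1.
have e1 : ((p ^ 2 - p) = (p - 1) * p)%N by rewrite -mulnn mulnBl mul1n.
case cQ : (cyclic Q).
- have eQ : psi Q = (psi X + (#|Q| - #|X|) * p ^ 2)%N.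
    apply: psi_split => // y yQX; have [m] := ordy y yQX; have := ny1 y yQX.
    case: m => [|[|[|m]]] // ; rewrite ?expn0 ?expn1 => ny _ oy; first by rewrite oy eqxx in ny.
    move: yQX => /setDP[yQ yX]; case/negP: yX.
    have : <[y]> == X :> {set gT} by rewrite (eq_subG_cyclic cQ) ?cycle_subG // oX -oy.
    by move/eqP <-; rewrite cycle_id.
  rewrite eQ pX oX oQ e1 -mulnn in hX.
  by move: hX; apply/negP; apply: ar2.
- have eQ : psi Q = (psi X + (#|Q| - #|X|) * p)%N.
    apply: psi_split => // y yQX; have [m] := ordy y yQX; have := ny1 y yQX.
    case: m => [|[|[|m]]] //; rewrite ?expn0 ?expn1 => ny _ oy //; first by rewrite oy eqxx in ny.
    move: yQX => /setDP[yQ _]; suff cQ2 : cyclic Q by rewrite cQ2 in cQ.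
    apply/cyclicP; exists y.
    by apply/eqP; rewrite eq_sym eqEcard cycle_subG yQ oQ -oy /= leqnn.
  rewrite eQ pX oX oQ e1 in hX.
  by move: hX; apply/negP; apply: ar1; apply: prime_gt1.
Qed.

Lemma sqf_of G : (forall H, H \subset G -> psi_divisible H) -> square_free #|G|.
Proof.
move=> hyp p pp; apply/negP => dv.
have [P sylP] := Sylow_exists p G.
have pP := pHall_pgroup sylP; have sPG := pHall_sub sylP.
have lP : 2 <= logn p #|P|.
  rewrite (card_Hall sylP) logn_part -pfactor_dvdn // mulnn in dv *; exact: dv.
have [Q [sQP _ oQ]] := normal_pgroup pP (normal_refl P) lP.
exact: (no_p2 Q p pp oQ (hyp Q (subset_trans sQP sPG))).
Qed.

Lemma psi_mul K L : K :&: L = 1 -> L \subset 'C(K) -> coprime #|K| #|L| ->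
  psi (K * L) = (psi K * psi L)%N.
Proof.
move=> tiKL cKL cop.
rewrite /psi -imset_mulgm big_imset /=; last first.

  move=> [a b] [a' b'] /setXP[/= aK bL] /setXP[/= aK' bL'] /= e.
  have e2 : a'^-1 * a = b' * b^-1.
    by rewrite -[a'^-1 * a]mulg1 -(mulgV b) mulgA -(mulgA a'^-1) e !mulgA mulVg mul1g.
  have : a'^-1 * a \in K :&: L by rewrite inE {2}e2 !groupM ?groupV.
  rewrite tiKL inE e2 => /eqP e3.
  have eb : b' = b by apply/eqP; rewrite eq_mulgV1 e3.
  move: e3; rewrite -e2 => /eqP; rewrite -eq_mulVg1 => /eqP ea.
  by rewrite ea eb.
transitivity (\sum_(u | (u.1 \in K) && (u.2 \in L)) #[u.1 * u.2])%N.
  by apply: eq_big => [[a b]|[a b] _]; rewrite ?in_setX.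
rewrite -(pair_big (fun a => a \in K) (fun b => b \in L) (fun a b => #[a * b])) /=.
rewrite big_distrl /=; apply: eq_bigr => a aK.
rewrite big_distrr /=; apply: eq_bigr => b bL /=.
apply: orderM.
  by have /centP := subsetP cKL b bL; move/(_ a aK).
exact: coprime_dvdl (order_dvdG aK) (coprime_dvdr (order_dvdG bL) cop).
Qed.

Lemma sqf_coprime n k : square_free n -> k %| n -> coprime k (n %/ k).
Proof.
move=> sq kn; rewrite /coprime; apply/negP => /negP nd.
have g0 : 0 < gcdn k (n %/ k).
  case: k kn {nd} => [|k] kn; last by rewrite gcdn_gt0.
  by move: kn; rewrite dvd0n => /eqP n0; move: (sq 2 isT); rewrite n0.
have g1 : 1 < gcdn k (n %/ k) by rewrite ltn_neqAle g0 andbT eq_sym.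
have pp := pdiv_prime g1.
have p1 := dvdn_trans (pdiv_dvd _) (dvdn_gcdl k (n %/ k)).
have p2 := dvdn_trans (pdiv_dvd _) (dvdn_gcdr k (n %/ k)).
case/negP: (sq _ pp); rewrite -[X in _ %| X](divnK kn); exact: dvdn_mul p2 p1.
Qed.

Lemma cyc_sqf_div H K : cyclic H -> square_free #|H| -> K \subset H ->
  (psi K %| psi H)%N.
Proof.
move=> cH sq sKH; have [g defH] := cyclicP cH.
have kH : #|K| %| #|H| by apply: cardSg.
pose L := <[g ^+ #|K|]>%G.
have oL : #|L| = (#|H| %/ #|K|)%N.
  by rewrite /L /= -/(#[_]) orderXdiv /order -defH.
have sLH : L \subset H by rewrite /L /= cycle_subG defH groupX // cycle_id.
have cop : coprime #|K| #|L| by rewrite oL sqf_coprime.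
have tiKL := coprime_TIg cop.
have cKL : L \subset 'C(K).
  apply: subset_trans sLH _; apply: subset_trans (centS sKH).
  exact: cyclic_abelian.
have eH : K * L = H.
  apply/eqP; rewrite eqEcard mulG_subG sKH sLH /= TI_cardMg // oL mulnC divnK // leqnn.
by rewrite -eH psi_mul // dvdn_mulr.
Qed.

Lemma pq_contra G x y : x \in G -> y \in G -> prime #[x] -> prime #[y] ->
  y \in 'N(<[x]>) -> ~ commute x y -> square_free #|G| ->
  (forall H, H \subset G -> psi_divisible H) -> False.
Proof.
move=> xG yG px py nxy ncxy sq hyp.
set q := #[x] in px; set p := #[y] in py.
pose X := <[x]>%G; pose Y := <[y]>%G.
have nXY : Y \subset 'N(X) by rewrite cycle_subG.
pose HH := (X <*> Y)%G.
have eHH : (HH : {set gT}) = X * Y by rewrite /= norm_joinEr.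
have sHG : HH \subset G by rewrite join_subG !cycle_subG xG yG.
have yX : y \notin X.
  apply/negP => /cycleP[k ek]; apply: ncxy; rewrite ek; exact: commuteX.
have tiXY : X :&: Y = 1.
  by rewrite setIC prime_TIg //= cycle_subG.
have oH : #|HH| = (q * p)%N by rewrite eHH TI_cardMg.
have npq : p != q.
  apply/eqP => epq; case/negP: (sq q px).
  by apply: dvdn_trans (cardSg sHG); rewrite oH epq.
have nXH : HH \subset 'N(X) by rewrite join_subG normG nXY.
have xH : x \in HH by rewrite (subsetP (joing_subl _ _)) // cycle_id.
have yH : y \in HH by rewrite (subsetP (joing_subr _ _)) // cycle_id.
have ordh : {in HH :\: X, forall h, #[h] = p}.
  move=> h /setDP[hH hX].
  have dh : #[h] %| q * p by rewrite -oH order_dvdG.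
  have ncH : ~~ cyclic HH.
    apply/negP => /cyclic_abelian /centsP cH; apply: ncxy.
    exact: (cH x xH y yH).
  case qd : (q %| #[h]).
  - case pd : (p %| #[h]).
      have : q * p %| #[h] by rewrite Gauss_dvd ?qd ?pd // coprime_sym prime_coprime // dvdn_prime2 // eq_sym.
      move=> qpd; have eh : #[h] = (q * p)%N by apply/eqP; rewrite eqn_dvd dh qpd.
      case/negP: ncH; apply/cyclicP; exists h; apply/eqP.
      by rewrite eq_sym eqEcard cycle_subG hH -/(#[h]) eh oH leqnn.
    have cdp : coprime #[h] p by rewrite coprime_sym prime_coprime // pd.
    have : #[h] %| q by rewrite -(Gauss_dvdl _ cdp).
    move=> hq; have eh : #[h] = q by apply/eqP; rewrite eqn_dvd hq qd.
    pose Hh := <[h]>%G.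
    have nXh : Hh \subset 'N(X) by rewrite cycle_subG (subsetP nXH).
    have tiXh : X :&: Hh = 1 by rewrite setIC prime_TIg //= ?cycle_subG // -/(#[h]) eh.
    have sJ : (X <*> Hh)%G \subset HH by rewrite join_subG joing_subl cycle_subG hH.
    have := cardSg sJ; rewrite /= norm_joinEr // TI_cardMg // oH.
    rewrite -/(#[h]) eh /= dvdn_pmul2l ?prime_gt0 // dvdn_prime2 //.
    by rewrite eq_sym (negbTE npq).
  - have cdq : coprime #[h] q by rewrite coprime_sym prime_coprime // qd.
    have : #[h] %| p by rewrite -(Gauss_dvdr _ cdq).
    case/primeP: py => _ /[apply] /orP[|/eqP //].
    by rewrite order_eq1 => /eqP h1; rewrite h1 group1 in hX.
have hHH := hyp HH sHG.
have e1 := psi_divP hHH (joing_subl X Y).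
have e2 := psi_divP hHH (joing_subr X Y).
have ePs : psi HH = (1 + (q - 1) * q + (p - 1) * p * q)%N.
  rewrite (@psi_split HH X p (joing_subl X Y) ordh) (psi_prime X) // oH.
  have oX : #|X| = q by []. rewrite oX -[X in (q * p - X)%N]muln1 -mulnBr.
  by congr (_ + _); rewrite [RHS]mulnC mulnA.
have oX : #|X| = q by []. have oY : #|Y| = p by [].
rewrite ePs (psi_prime X) // oX in e1; rewrite ePs (psi_prime Y) // oY in e2.
exact: (@ar3 p q py px npq e1 e2).
Qed.

Lemma sqf_logn n p : 0 < n -> square_free n -> logn p n <= 1.
Proof.
move=> n0 sq; rewrite leqNgt; apply/negP => lt.
have pp : prime p.
  by move: (ltnW lt); rewrite logn_gt0 mem_primes => /andP[].
case/negP: (sq p pp); rewrite mulnn pfactor_dvdn //.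
Qed.

Lemma sqf_Zgroup G : square_free #|G| -> Zgroup G.
Proof.
move=> sq; apply/forall_inP => V /SylowP[p pp sylV].
apply: (dvdn_prime_cyclic pp).
rewrite (card_Hall sylV) p_part.
have := dvdn_exp2l p (@sqf_logn _ p (cardG_gt0 G) sq); by rewrite expn1.
Qed.

Lemma sqf_abelian_cyclic G : square_free #|G| -> abelian G -> cyclic G.
Proof. by move=> sq ab; apply: nil_Zgroup_cyclic; [apply: sqf_Zgroup | apply: abelian_nil]. Qed.

Lemma constt_prime G x (p : nat) : square_free #|G| -> x \in G -> x.`_p != 1 ->
  prime p /\ #[x.`_p] = p.
Proof.
move=> sq xG nx1.
have ox : #[x.`_p] = (p ^ logn p #[x])%N by rewrite order_constt p_part.
have sqx : square_free #[x].
  move=> r pr; apply: contra (sq r pr) => h; exact: dvdn_trans h (order_dvdG xG).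
have le1 := @sqf_logn _ p (order_gt0 x) sqx.
have ge1 : 0 < logn p #[x].
  rewrite lt0n; apply: contra nx1 => /eqP l0.
  by rewrite -order_eq1 ox l0.
have pp : prime p by move: ge1; rewrite logn_gt0 mem_primes => /andP[].
split => //; rewrite ox; have -> : logn p #[x] = 1%N by apply/eqP; rewrite eqn_leq le1 ge1.
by rewrite expn1.
Qed.

Lemma prime_comp G (C : {group gT}) x : square_free #|G| -> x \in G -> x \notin C ->
  exists r, [/\ r \in <[x]>, r \in G, r \notin C & prime #[r]].
Proof.
move=> sq xG xC.
have [/hasP[p _ pC] | nh] := boolP (has (fun p : nat => x.`_p \notin C) (iota 0 #[x].+1)).
  have nr1 : x.`_p != 1 by apply: contraNneq pC => ->; exact: group1.
  have [pp op] := constt_prime _ _ _ sq xG nr1.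
  exists x.`_p; split => //; first exact: cycle_constt.
    by rewrite (subsetP _ _ (cycle_constt p x)) // cycle_subG.
  by rewrite op.
case/negP: xC; rewrite -(prod_constt x) big_seq.
apply: (big_ind (fun y => y \in C)) => [|a b aC bC|i ii]; first exact: group1.
  exact: groupM.
apply: contraR nh => iC; apply/hasP; exists i => //.
Qed.

Section Key.
Variable G : {group gT}.
Hypothesis sq : square_free #|G|.
Hypothesis hprop : forall H : {group gT}, H \proper G -> cyclic H.
Hypothesis ncG : ~~ cyclic G.

Definition goodr r := [&& r \in G, prime #[r] & r \notin 'Z(G)].
Definition Fam := [set 'C_G[r] | r in [pred r | goodr r]].

Lemma ab_comm (A : {group gT}) x y : abelian A -> x \in A -> y \in A -> commute x y.
Proof. by move=> /centsP cA xA yA; exact: cA x xA y yA. Qed.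

Lemma Cr_proper {r} : r \in G -> r \notin 'Z(G) -> 'C_G[r] \proper G.
Proof.
move=> rG rZ; rewrite properEneq subsetIl andbT.
apply: contraNneq rZ => e.
have : G \subset 'C[r] by rewrite -{1}e subsetIr.
by rewrite sub_cent1 => rC; rewrite /center inE rG.
Qed.

Lemma Cr_cyclic {r} : goodr r -> cyclic 'C_G[r].
Proof. by case/and3P => rG _ rZ; apply: hprop; apply: Cr_proper. Qed.

Lemma Z_sub_Cr {r} : r \in G -> 'Z(G) \subset 'C_G[r].
Proof.
move=> rG; rewrite subsetI center_sub sub_cent1.
have : G \subset 'C('Z(G)) by rewrite centsC subsetIr.
by move/subsetP; apply.
Qed.

Lemma r_in_Cr {r} : r \in G -> r \in 'C_G[r].
Proof. by move=> rG; rewrite inE rG cent1id. Qed.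

Lemma Cr_two {r} : goodr r -> 2 * #|'Z(G)| <= #|'C_G[r]|.
Proof.
case/and3P => rG pr rZ.
have sZ := Z_sub_Cr rG.
have /dvdnP[k ek] := cardSg sZ.
have k0 : k != 0%N by apply: contraTneq (cardG_gt0 'C_G[r]%G) => k0; rewrite ek k0.
have k1 : k != 1%N.
  apply: contraNneq rZ => k1.
  have : 'Z(G) == 'C_G[r] :> {set gT} by rewrite eqEcard sZ ek k1 mul1n leqnn.
  by move/eqP => ->; apply: r_in_Cr.
rewrite ek leq_mul2r; apply/orP; right; move: k0 k1; case: k {ek} => [|[|k]] //.
Qed.

Hypothesis hn : forall r, goodr r -> ~~ (G \subset 'N(<[r]>)).

Lemma Cr_norm {r} : goodr r -> 'N_G('C_G[r]) = 'C_G[r].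
Proof.
move=> gr; have /and3P[rG pr rZ] := gr.
set C := 'C_G[r].
have sCN : C \subset 'N_G(C) by rewrite subsetI subsetIl normG.
have sNG : 'N_G(C) \subset G by apply: subsetIl.
have rC : r \in C by apply: r_in_Cr.
have prN : 'N_G(C) \proper G.
  rewrite properEneq sNG andbT; apply/negP => /eqP eN.
  case/negP: (hn r gr); apply/normsP => g gG.
  have gN : g \in 'N(C) by move: gG; rewrite -{1}eN inE => /andP[].
  rewrite -cycleJ; apply/eqP.
  rewrite (eq_subG_cyclic (Cr_cyclic gr)) ?cycle_subG ?memJ_norm //.
  by rewrite -!/(#[_]) orderJ.
have cN : abelian 'N_G(C) by apply: cyclic_abelian; apply: hprop.
apply/eqP; rewrite eqEsubset sCN andbT subsetI sNG /=.
apply/subsetP => n nN; apply/cent1P.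
apply: ab_comm cN nN _; exact: (subsetP sCN).
Qed.

Lemma Fam_good {D} : D \in Fam -> exists2 r, goodr r & D = 'C_G[r].
Proof. by case/imsetP => r; rewrite inE => gr ->; exists r. Qed.

Lemma Fam_conj {D g} : D \in Fam -> g \in G -> D :^ g \in Fam.
Proof.
move=> /Fam_good[r gr ->] gG; have /and3P[rG pr rZ] := gr.
rewrite conjIg conjGid // -cent1J; apply: imset_f; rewrite inE /goodr.
rewrite groupJ // orderJ pr /= memJ_norm //.
by apply: (subsetP (normal_norm (center_normal G))).
Qed.

Lemma Fam_inter {D1 D2} : D1 \in Fam -> D2 \in Fam -> D1 != D2 -> D1 :&: D2 \subset 'Z(G).
Proof.
move=> /Fam_good[r gr ->] /Fam_good[s gs ->] neq.
have /and3P[rG pr rZ] := gr; have /and3P[sG ps sZ] := gs.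
case sCr : (s \in 'C[r]).
  case/negP: neq; apply/eqP.
  have crs : commute s r by apply/cent1P.
  have sr : s \in 'C_G[r] by rewrite inE sG sCr.
  have rs : r \in 'C_G[s] by rewrite inE rG; apply/cent1P; apply: commute_sym.
  have aR := cyclic_abelian (Cr_cyclic gr); have aS := cyclic_abelian (Cr_cyclic gs).
  apply/eqP; rewrite eqEsubset; apply/andP; split; apply/subsetP => g gC.
    rewrite inE (subsetP (subsetIl _ _) g gC) /=; apply/cent1P.
    exact: ab_comm aR gC sr.
  rewrite inE (subsetP (subsetIl _ _) g gC) /=; apply/cent1P.
  exact: ab_comm aS gC rs.
pose J := (<[r]> <*> <[s]>)%G.
have sJG : J \subset G by rewrite join_subG !cycle_subG rG sG.
have rJ : r \in J by rewrite (subsetP (joing_subl _ _)) // cycle_id.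
have sJ : s \in J by rewrite (subsetP (joing_subr _ _)) // cycle_id.
have eJ : J = G :> {set gT}.
  apply/eqP; apply: contraFT sCr => nJ.
  have cJ : abelian J by apply: cyclic_abelian; apply: hprop; rewrite properEneq nJ sJG.
  by apply/cent1P; apply: ab_comm cJ sJ rJ.
apply/subsetP => g /setIP[/setIP[gG gr'] /setIP[_ gs']].
rewrite /center inE gG /= -sub_cent1 -eJ join_subG !cycle_subG.
by apply/andP; split; apply/cent1P; apply: commute_sym; apply/cent1P.
Qed.

Lemma Fam_sum {S : {set {set gT}}} : S \subset Fam ->
  (\sum_(D in S) #|D :\: 'Z(G)| = #|\bigcup_(D in S) (D :\: 'Z(G))|)%N.
Proof.
move=> sS.
have disj : {in (fun D => D \in S) &, forall D1 D2, D2 != D1 ->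
    [disjoint D1 :\: 'Z(G) & D2 :\: 'Z(G)]}.
  move=> D1 D2 D1S D2S neq; rewrite -setI_eq0; apply/eqP/setP => x.
  rewrite in_setI in_set0; apply/negP => /andP[/setDP[xD1 xZ] /setDP[xD2 _]].
  have := Fam_inter (subsetP sS _ D1S) (subsetP sS _ D2S).
  rewrite eq_sym neq => /(_ isT) /subsetP /(_ x).
  have xI : x \in D1 :&: D2 by rewrite in_setI xD1 xD2.
  by move/(_ xI); rewrite (negbTE xZ).
have n0 : set0 \notin [set D :\: 'Z(G) | D in (fun D => D \in S)].
  apply/imsetP => -[D DS e].
  have [r /and3P[rG _ rZ] eD] := Fam_good (subsetP sS _ DS).
  have : r \in D :\: 'Z(G) by rewrite inE rZ eD r_in_Cr.
  by rewrite -e inE.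
have [tI inj] := trivIimset disj n0.
move/eqP: tI; rewrite big_imset //= => ->.
by rewrite cover_imset.
Qed.

Lemma orbit_props {D} : D \in Fam ->
  [/\ D :^: G \subset Fam,
      (\sum_(E in D :^: G) #|E :\: 'Z(G)| = #|D :^: G| * (#|D| - #|'Z(G)|))%N
    & (#|D :^: G| * #|D| = #|G|)%N].
Proof.
move=> DF; have [r gr eD] := Fam_good DF; have /and3P[rG _ _] := gr.
split.
- by apply/subsetP => E /imsetP[g gG ->]; exact: Fam_conj DF gG.
- rewrite (eq_bigr (fun _ => #|D| - #|'Z(G)|)%N) ?sum_nat_const // => E /imsetP[g gG ->].
  rewrite cardsD (setIidPr _) ?cardJg //.
  have <- : 'Z(G) :^ g = 'Z(G) by apply: (normsP (normal_norm (center_normal G))).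
  by rewrite conjSg eD Z_sub_Cr.
- rewrite card_conjugates eD Cr_norm // mulnC Lagrange //; exact: subsetIl.
Qed.

Lemma key_false : False.
Proof.
have nab : ~~ abelian G by apply: contra ncG; apply: sqf_abelian_cyclic.
have /subsetPn[x xG xZ] : ~~ (G \subset 'Z(G)).
  apply: contra nab => sGZ; rewrite /abelian; exact: subset_trans sGZ (subsetIr _ _).
have [r0 [_ r0G r0Z pr0]] := prime_comp _ _ _ sq xG xZ.
have gr0 : goodr r0 by rewrite /goodr r0G pr0 r0Z.
pose D1 := 'C_G[r0].
have D1F : D1 \in Fam by apply: imset_f; rewrite inE.
have [sO1 sum1 card1] := orbit_props D1F.
have two1 := Cr_two gr0.
have z0 : 0 < #|'Z(G)| by apply: cardG_gt0.
have n0 : 0 < #|G| by apply: cardG_gt0.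
have k1 : 1 < #|D1 :^: G|.
  have := proper_card (Cr_proper r0G r0Z); rewrite -/D1 -card1.
  case: #|D1 :^: G| => [|[|k]] //; by rewrite mul1n ltnn.
have cGZ : #|G :\: 'Z(G)| = (#|G| - #|'Z(G)|)%N by rewrite cardsD (setIidPr (center_sub G)).
pose U1 := \bigcup_(E in D1 :^: G) (E :\: 'Z(G)).
have cU1 : #|U1| < #|G :\: 'Z(G)|.
  rewrite /U1 -(Fam_sum sO1) sum1 cGZ; apply: ar5 => //.
  by apply: leq_trans two1; rewrite leq_pmull.
have /subsetPn[y yGZ yU] : ~~ (G :\: 'Z(G) \subset U1).
  by apply: contraTN cU1 => /subset_leq_card; rewrite leqNgt.
have /setDP[yG yZ] := yGZ.
have [s [sy sG sZ ps]] := prime_comp _ _ _ sq yG yZ.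
have gs : goodr s by rewrite /goodr sG ps sZ.
pose D2 := 'C_G[s].
have D2F : D2 \in Fam by apply: imset_f; rewrite inE.
have yD2 : y \in D2.
  rewrite inE yG; apply/cent1P; case/cycleP: sy => i ->.
  exact: commuteX.
have D2O1 : D2 \notin D1 :^: G.
  apply: contra yU => D2O; apply/bigcupP; exists D2 => //.
  by rewrite inE yZ.
have [sO2 sum2 card2] := orbit_props D2F.
have two2 := Cr_two gs.
have disj : [disjoint D1 :^: G & D2 :^: G].
  rewrite -setI_eq0; apply/eqP/setP => E; rewrite in_setI in_set0.
  apply/negP => /andP[/imsetP[g gG e1] /imsetP[h hG e2]].
  case/negP: D2O1; apply/imsetP; exists (g * h^-1); first by rewrite groupM ?groupV.
  by rewrite conjsgM -e1 e2 conjsgK.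
pose S := D1 :^: G :|: D2 :^: G.
have sS : S \subset Fam by rewrite subUset sO1 sO2.
have le : (\sum_(E in S) #|E :\: 'Z(G)| <= #|G| - #|'Z(G)|)%N.
  rewrite (Fam_sum sS) -cGZ; apply: subset_leq_card; apply/bigcupsP => E ES.
  have [t _ ->] := Fam_good (subsetP sS _ ES).
  by apply: setSD; apply: subsetIl.
have eS : (\sum_(E in S) #|E :\: 'Z(G)| = \sum_(E in [predU D1 :^: G & D2 :^: G]) #|E :\: 'Z(G)|)%N.
  by apply: eq_bigl => E; rewrite !inE.
rewrite eS bigU // sum1 sum2 in le.
exact: (@ar4 _ _ _ _ _ _ card1 card2 two1 two2 z0 n0 le).
Qed.


End Key.

Lemma key_exists G : square_free #|G| -> (forall H, H \proper G -> cyclic H) ->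
  ~~ cyclic G -> exists r, goodr G r && (G \subset 'N(<[r]>)).
Proof.
move=> sq hp nc.
case: (boolP [exists r, goodr G r && (G \subset 'N(<[r]>))]) => [/existsP // | /existsPn hn].
exfalso; apply: (@key_false G sq hp nc) => r gr; move: (hn r); by rewrite gr.
Qed.

Lemma cyc_main n G : #|G| <= n -> (forall H, H \subset G -> psi_divisible H) -> cyclic G.
Proof.
elim: n G => [|n IH] G.
  by rewrite leqn0 => /eqP c0; have := cardG_gt0 G; rewrite c0.
move=> le hyp; have sq := sqf_of _ hyp.
case: (boolP (cyclic G)) => // nc; exfalso.
have hp : forall H, H \proper G -> cyclic H.
  move=> H pH; apply: IH.
    by rewrite -ltnS; apply: leq_trans le; apply: proper_card.
  by move=> K sKH; apply: hyp; apply: subset_trans sKH (proper_sub pH).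
have [r /andP[/and3P[rG pr rZ] nr]] := key_exists _ sq hp nc.
have /subsetPn[y yG yC] : ~~ (G \subset 'C[r]).
  by rewrite sub_cent1; apply: contra rZ => rC; rewrite /center inE rG.
have [s [sy sG sC ps]] := prime_comp _ _ _ sq yG yC.
apply: (@pq_contra G r s rG sG pr ps (subsetP nr s sG) _ sq hyp).
by move=> crs; case/negP: sC; apply/cent1P; apply: commute_sym.
Qed.

Lemma sqf_sub G H : H \subset G -> square_free #|G| -> square_free #|H|.
Proof.
move=> sHG sq p pp; apply: contra (sq p pp) => h; exact: dvdn_trans h (cardSg sHG).
Qed.

End S.

Theorem theorem2p2 (gT : finGroupType) (G : {group gT}) :
  (forall H : {group gT}, H \subset G -> psi_divisible H) <->
  (cyclic G /\ square_free #|G|).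
Proof.
split.
  move=> h; split; [exact: (@cyc_main _ #|G| G (leqnn _) h) | exact: sqf_of _ _ h].
case=> cG sq H sHG; apply/forallP => K; apply/implyP => sKH.
apply: cyc_sqf_div => //; first exact: cyclicS sHG cG.
exact: sqf_sub sHG sq.
Qed.
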